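(* Let $n\ge2$ and let $S=S_1S_2\cdots$ be as defined in the context. Suppose $\mathrm{PPM}^*$ has already processed $S_1\cdots S_{n-1}$. Then once it has processed the first $2^n+n$ bits of $S_n$ (i.e. $S_n[0..2^n+n-1]$), its model contains a context for every $w\in\{0,1\}^n$.
   Context: Strings are indexed from $0$; $x[i..j]$ is the substring from position $i$ to $j$; $x^j$ is $j$-fold concatenation. de Bruijn strings: for $n\ge1$, a de Bruijn string of order $n$ is a binary string $x$ of length $2^n$ such that every $w\in\{0,1\}^n$ occurs exactly once as a substring of $x\cdot x[0..n-2]$. $db(n)$ is the lexicographically least one, produced by Martin's algorithm: start with $x=1^{n-1}$; while possible, append a bit (preferring $0$ over $1$) so that all length-$n$ substrings of $x$ remain distinct; then delete the prefix $1^{n-1}$. For $0\le i<2^n$, $db_i(n)=db(n)[i..2^n-1]\cdot db(n)[0..i-1]$. The sequence $S$: for $n\ge1$ write $n=2^st$ with $t$ odd, let $B_{n,i}=db_i(n)^t$ for $0\le i<2^s$, $S_n=B_{n,0}B_{n,1}\cdots B_{n,2^s-1}$, and $S=S_1S_2\cdots$. The $\mathrm{PPM}^*$ model after reading a prefix $x$: each stored context $c$ records, for each bit $b$, the number of occurrences of $cb$ in $x$. The stored contexts are the empty context and, whenever a string $w$ occurs at least twice as a substring of $x$, the contexts $wb$ for each bit $b$ such that $wb$ occurs in $x$ followed by a further bit (a context is only created once a bit following it has been seen, so that it has a prediction). The model is updated after each bit read. *)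

(* Defs.v *)
From mathcomp Require Import all_boot.
Set Implicit Arguments. Unset Strict Implicit. Unset Printing Implicit Defensive.

(* Bits: 0 = false, 1 = true. Strings are seq bool, indexed from 0. *)

Definition windows (n : nat) (x : seq bool) : seq (seq bool) :=
  [seq take n (drop i x) | i <- iota 0 ((size x).+1 - n)].

Definition martin_step (n : nat) (x : seq bool) : seq bool :=
  if uniq (windows n (rcons x false)) then rcons x false
  else if uniq (windows n (rcons x true)) then rcons x true
  else x.

(* At most 2^n bits can be appended (there are 2^n distinct length-n words),
   so 2^n iterations suffice; further iterations would be no-ops. *)
Definition martin (n : nat) : seq bool :=
  iter (2 ^ n) (martin_step n) (nseq n.-1 true).

Definition db (n : nat) : seq bool := drop n.-1 (martin n).

Definition dbi (n i : nat) : seq bool := rot i (db n).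

(* n = 2^s t with t odd *)
Definition sexp (n : nat) : nat := logn 2 n.
Definition todd (n : nat) : nat := n %/ 2 ^ sexp n.

Definition Bblock (n i : nat) : seq bool := flatten (nseq (todd n) (dbi n i)).
Definition Sblock (n : nat) : seq bool :=
  flatten [seq Bblock n i | i <- iota 0 (2 ^ sexp n)].

Definition Sprefix (n : nat) : seq bool :=
  flatten [seq Sblock k | k <- iota 1 n.-1].

Definition occ (w x : seq bool) : nat :=
  count (fun i => take (size w) (drop i x) == w) (iota 0 ((size x).+1 - size w)).

Definition substr (w x : seq bool) : Prop := 0 < occ w x.

Definition ppm_context (x c : seq bool) : Prop :=
  c = [::] \/
  exists (w : seq bool) (b : bool),
    c = rcons w b /\ 2 <= occ w x /\ exists b' : bool, substr (rcons (rcons w b) b') x.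

(* Main.v *)
Require Import Defs.
From mathcomp Require Import all_boot.
From mathcomp Require Import zify.
Set Implicit Arguments. Unset Strict Implicit. Unset Printing Implicit Defensive.

Ltac nlia := repeat match goal with
  | |- context[@size (Equality.sort ?T) ?s] => change (@size (Equality.sort T) s) with (@size bool s)
  | H : context[@size (Equality.sort ?T) ?s] |- _ => change (@size (Equality.sort T) s) with (@size bool s) in H
  | x : Equality.sort _ |- _ => change nat in x
  end; lia.

Definition AW n : seq (seq bool) := map val (enum {: n.-tuple bool}).
Lemma size_AW n : size (AW n) = 2 ^ n.
Proof. by rewrite size_map -cardE card_tuple card_bool. Qed.
Lemma uniq_AW n : uniq (AW n).
Proof. rewrite map_inj_uniq ?enum_uniq //; exact: val_inj. Qed.
Lemma mem_AW n w : size w = n -> w \in AW n.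
Proof. move=> h. have h' : size w == n by apply/eqP.
apply/mapP; exists (Tuple h') => //; by rewrite mem_enum. Qed.

Lemma size_windows n x : size (windows n x) = (size x).+1 - n.
Proof. by rewrite /windows size_map size_iota. Qed.

Lemma windowsP n x w : reflect (exists2 i, i + n <= size x & w = take n (drop i x))
   (w \in windows n x).
Proof.
apply: (iffP mapP) => [[i]|[i hi ->]].
  rewrite mem_iota => /andP[_ hi] ->; exists i => //; nlia.
exists i => //; rewrite mem_iota; apply/andP; split => //; nlia.
Qed.

Lemma size_win n x w : w \in windows n x -> size w = n.
Proof. case/windowsP => i hi ->; rewrite size_takel // size_drop; have := leq_sub2r i hi; by rewrite addKn. Qed.

Lemma windows_rcons n x b : 1 < n -> n <= (size x).+1 ->
  windows n (rcons x b) = rcons (windows n x) (rcons (drop ((size x).+1 - n) x) b).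
Proof.
move=> h0 h1; rewrite /windows size_rcons.
have -> : (size x).+2 - n = ((size x).+1 - n) + 1 by nlia.
rewrite iotaD map_cat cats1 /= add0n; congr rcons.
  apply/(@eq_in_map nat) => i; rewrite mem_iota => /andP[_ hi].
  rewrite -cats1 drop_cat ifT; last by nlia.
  rewrite takel_cat // size_drop; nlia.
rewrite -cats1 drop_cat ifT; last by nlia.
rewrite cats1 take_oversize // size_rcons size_drop; nlia.
Qed.

Definition greedy (W : seq (seq bool)) :=
  forall v, rcons v true \in W -> rcons v false \in W.

Definition stuck n x := ~~ uniq (windows n (rcons x false)) && ~~ uniq (windows n (rcons x true)).

Definition Inv n x := [/\ n.-1 <= size x, take n.-1 x = nseq n.-1 true,
   uniq (windows n x) & greedy (windows n x)].

Lemma step_inv n x : 1 < n -> Inv n x ->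
  [/\ Inv n (martin_step n x), (stuck n x -> martin_step n x = x) &
      (~~ stuck n x -> size (windows n (martin_step n x)) = (size (windows n x)).+1)].
Proof.
move=> hn [h1 h2 h3 h4].
have wr := @windows_rcons n x _ hn.
have hs : n <= (size x).+1 by nlia.
set L := drop ((size x).+1 - n) x.
have app : forall b, uniq (windows n (rcons x b)) ->
   (b = true -> ~~ uniq (windows n (rcons x false))) -> Inv n (rcons x b).
  move=> b hu hb; split => //.
  - rewrite size_rcons; nlia.
  - by rewrite -cats1 takel_cat.
  move=> v; rewrite (wr b hs) !mem_rcons !in_cons => /orP[/eqP e|hv].
    case: (rcons_inj e) => -> eb; rewrite -eb in hb.
    have := hb erefl; rewrite (wr false hs) rcons_uniq h3 andbT negbK => ->.
    by rewrite orbT.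
  by rewrite h4 // orbT.
rewrite /martin_step /stuck.
case E0: (uniq (windows n (rcons x false))) => /=.
  split => //; first by apply: app.
  by rewrite (wr false hs) size_rcons.
case E1: (uniq (windows n (rcons x true))) => /=.
  split => //; first by apply: app => // _; rewrite E0.
  by rewrite (wr true hs) size_rcons.
by split => //; split.
Qed.

Lemma Inv_init n : 1 < n -> Inv n (nseq n.-1 true) /\ windows n (nseq n.-1 true) = [::].
Proof.
move=> hn. have e : windows n (nseq n.-1 true) = [::].
  apply/size0nil; rewrite size_windows size_nseq; nlia.
split=> //; split; rewrite ?e ?size_nseq ?take_nseq //.
Qed.

Lemma iter_inv n k : 1 < n ->
  Inv n (iter k (martin_step n) (nseq n.-1 true)) /\
  (stuck n (iter k (martin_step n) (nseq n.-1 true)) \/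
   size (windows n (iter k (martin_step n) (nseq n.-1 true))) = k).
Proof.
move=> hn; elim: k => [|k [hI hs]] /=.
  have [h e] := Inv_init hn; split => //; right; by rewrite e.
have [h1 h2 h3] := step_inv hn hI; split => //.
case st: (stuck n (iter k (martin_step n) (nseq n.-1 true))).
  by left; rewrite h2.
right; rewrite h3 ?st //; case: hs => [|->] //; by rewrite st.
Qed.

Lemma martin_final n : 1 < n -> Inv n (martin n) /\ stuck n (martin n).
Proof.
move=> hn; rewrite /martin; have [hI [hs|hs]] := @iter_inv n (2^n) hn; split => //.
have [h1 h2 h3 h4] := hI.
set M := iter _ _ _ in hI h1 h2 h3 h4 hs *.
have sub : {subset windows n M <= AW n} by move=> w /size_win /mem_AW.
have hsz : size (AW n) <= size (windows n M) by rewrite size_AW hs.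
have [_ eqW] := uniq_min_size h3 sub hsz.
have wr := @windows_rcons n M _ hn.
have hs' : n <= (size M).+1 by nlia.
rewrite /stuck !wr // !rcons_uniq h3 !andbT !negbK !eqW.
rewrite !mem_AW //; rewrite size_rcons size_drop; nlia.
Qed.

Definition outd n (W : seq (seq bool)) v := count (fun w => take n.-1 w == v) W.
Definition ind (W : seq (seq bool)) v := count (fun w => behead w == v) W.

Lemma V_rcons n M : 1 < n -> n.-1 <= size M ->
  windows n.-1 M = rcons (map (take n.-1) (windows n M)) (drop ((size M).+1 - n) M).
Proof.
move=> hn hM; rewrite /windows.
have -> : (size M).+1 - n.-1 = ((size M).+1 - n) + 1 by nlia.
rewrite iotaD map_cat cats1 /= -map_comp; congr rcons.
  apply/(@eq_in_map nat) => i _ /=; by rewrite take_takel // leq_pred.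
rewrite add0n take_oversize // size_drop; nlia.
Qed.

Lemma V_cons n M : 1 < n -> n.-1 <= size M ->
  windows n.-1 M = take n.-1 M :: map behead (windows n M).
Proof.
move=> hn hM; rewrite /windows.
have -> : (size M).+1 - n.-1 = 1 + ((size M).+1 - n) by nlia.
rewrite iotaD map_cat /= drop0 (iotaDl 1 0) -!map_comp; congr cons.
apply/(@eq_in_map nat) => i _ /=.
rewrite -drop_drop drop1; case: (drop i M) => [|a s]; case: n hn {hM} => [|n] //=.
Qed.

Lemma flow n M v : 1 < n -> n.-1 <= size M ->
  outd n (windows n M) v + (drop ((size M).+1 - n) M == v) =
  (take n.-1 M == v) + ind (windows n M) v.
Proof.
move=> hn hM.
have := congr1 (count (pred1 v)) (V_rcons hn hM).
rewrite (V_cons hn hM) -cats1 count_cat /= count_map addn0 => ->.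
by rewrite count_map.
Qed.

Lemma count2 (W : seq (seq bool)) (f : seq bool -> seq bool) v a c :
  uniq W -> a != c -> (forall w, w \in W -> (f w == v) = (w == a) || (w == c)) ->
  count (fun w => f w == v) W = (a \in W) + (c \in W).
Proof.
move=> u ne h.
rewrite (@eq_in_count _ _ (predU (pred1 a) (pred1 c))); last by move=> w /h.
have e0 : count (predI (pred1 a) (pred1 c)) W = 0.
  apply/eqP; rewrite -leqn0 leqNgt -has_count; apply/hasP => [[w _ /andP[/eqP e1 /eqP e2]]].
  by move/eqP: ne; apply; rewrite -e1 -e2.
have := count_predUI (pred1 a) (pred1 c) W; rewrite e0 addn0 => ->.
by rewrite !count_uniq_mem.
Qed.

Lemma outdE n M v : 1 < n -> uniq (windows n M) -> size v = n.-1 ->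
  outd n (windows n M) v = (rcons v false \in windows n M) + (rcons v true \in windows n M).
Proof.
move=> hn u sv; apply: count2 => //.
  by apply/eqP => /rcons_inj.
move=> w /size_win sw; apply/eqP/orP => [e | [/eqP -> | /eqP ->]]; try by rewrite -cats1 take_size_cat.
have hs : size (drop n.-1 w) = 1 by rewrite size_drop sw; nlia.
have := cat_take_drop n.-1 w; rewrite e.
case: (drop n.-1 w) hs => [|c [|]] // _ <-; rewrite cats1; case: c; [right|left]; exact: eqxx.
Qed.

Lemma indE n M v : 1 < n -> uniq (windows n M) ->
  ind (windows n M) v = (false :: v \in windows n M) + (true :: v \in windows n M).
Proof.
move=> hn u; apply: count2 => //.
move=> w /size_win sw; case: w sw => [|c w] sw; first by move: hn; rewrite -sw.
rewrite /= !eqseq_cons; case: c sw => _ /=; by case: (w == v).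
Qed.

Lemma claim1 n M : 1 < n -> Inv n M -> stuck n M ->
  drop ((size M).+1 - n) M = nseq n.-1 true.
Proof.
move=> hn [h1 h2 h3 h4] /andP[s0 s1].
have hs : n <= (size M).+1 by nlia.
have sL : size (drop ((size M).+1 - n) M) = n.-1 by rewrite size_drop; nlia.
move: s0 s1; rewrite (windows_rcons false hn hs) (windows_rcons true hn hs).
rewrite !rcons_uniq h3 !andbT !negbK => s0 s1.
have := flow (drop ((size M).+1 - n) M) hn h1.
rewrite eqxx (outdE hn h3 sL) s0 s1 (indE _ hn h3) h2 => e.
apply/eqP; rewrite eq_sym; move: e.
case: (_ == _) => //; case: (_ \in _); case: (_ \in _) => //.
Qed.

Definition stepw (v : seq bool) := behead (rcons v true).

Lemma nseqSr k (x : bool) : rcons (nseq k x) x = nseq k.+1 x.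
Proof. by elim: k => //= k ->. Qed.

Lemma iter_stepw k v : iter k stepw v = drop k (v ++ nseq k true).
Proof.
elim: k => [|k IH] /=; first by rewrite drop0 cats0.
rewrite IH /stepw -drop_rcons; last by rewrite size_cat size_nseq leq_addl.
by rewrite -drop1 drop_drop rcons_cat nseqSr add1n.
Qed.

Lemma claim2 n M : 1 < n -> Inv n M -> stuck n M ->
  forall w, size w = n -> w \in windows n M.
Proof.
move=> hn hI hst; have e1 := claim1 hn hI hst.
case: hI => h1 h2 h3 h4.
have hs : n <= (size M).+1 by nlia.
have bal : forall v, outd n (windows n M) v = ind (windows n M) v.
  move=> v; have := flow v hn h1; rewrite e1 h2; nlia.
have le2 : forall v, size v = n.-1 -> outd n (windows n M) v <= 2.
  by move=> v sv; rewrite (outdE hn h3 sv); case: (_ \in _); case: (_ \in _).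
have ones2 : outd n (windows n M) (nseq n.-1 true) = 2.
  move: hst => /andP[s0 s1]; move: s0 s1.
  rewrite (windows_rcons false hn hs) (windows_rcons true hn hs).
  rewrite !rcons_uniq h3 !andbT !negbK e1 => s0 s1.
  by rewrite (outdE hn h3 (size_nseq _ _)) s0 s1.
have stp : forall v, size v = n.-1 -> outd n (windows n M) v < 2 ->
    outd n (windows n M) (stepw v) < 2.
  move=> v sv lt.
  have nin : rcons v true \notin windows n M.
    apply/negP => hin; move: lt; by rewrite (outdE hn h3 sv) hin (h4 _ hin).
  have ee : rcons v true = head true (rcons v true) :: stepw v by case: v {sv lt nin}.
  rewrite bal (indE _ hn h3).
  move: nin; rewrite ee; case: (head true _) => /negbTE ->; by case: (_ \in _).
have all2 : forall v, size v = n.-1 -> outd n (windows n M) v = 2.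
  move=> v sv; apply/eqP; rewrite eqn_leq le2 //=; rewrite leqNgt; apply/negP => lt.
  have : forall k, size (iter k stepw v) = n.-1 /\ outd n (windows n M) (iter k stepw v) < 2.
    elim => [|k [IH1 IH2]] //=; split; last exact: stp.
    by rewrite /stepw size_behead size_rcons IH1.
  by move=> /(_ n.-1) [_]; rewrite iter_stepw drop_size_cat // ones2.
move=> w; case/lastP: w => [|u c] sw; first by move: hn; rewrite -sw.
have su : size u = n.-1 by rewrite size_rcons in sw; nlia.
have := all2 u su; rewrite (outdE hn h3 su).
by case: c {sw}; case: (rcons u false \in _); case: (rcons u true \in _).
Qed.

Lemma AW_size n w : w \in AW n -> size w = n.
Proof. by case/mapP => t _ ->; rewrite size_tuple. Qed.

Lemma iter_prefix n k x : exists s, iter k (martin_step n) x = x ++ s.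
Proof.
elim: k => [|k [s IH]] /=; first by exists [::]; rewrite cats0.
rewrite IH /martin_step; case: ifP => _.
  by exists (rcons s false); rewrite rcons_cat.
case: ifP => _; last by exists s.
by exists (rcons s true); rewrite rcons_cat.
Qed.

Lemma drop_catl (T : Type) i (s1 s2 : seq T) : i <= size s1 -> drop i (s1 ++ s2) = drop i s1 ++ s2.
Proof. move=> h; rewrite drop_cat; case: ltnP => // h'.
have -> : i = size s1 by apply/eqP; rewrite eqn_leq h h'.
by rewrite subnn drop0 drop_size. Qed.

Lemma drop_catr (T : Type) i (s1 s2 : seq T) : size s1 <= i -> drop i (s1 ++ s2) = drop (i - size s1) s2.
Proof. by move=> h; rewrite drop_cat ltnNge h. Qed.

Lemma take_catr (T : Type) i (s1 s2 : seq T) : size s1 <= i -> take i (s1 ++ s2) = s1 ++ take (i - size s1) s2.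
Proof. by move=> h; rewrite take_cat ltnNge h. Qed.

Lemma uniq_init n j : 1 < n -> j <= n -> uniq (windows n (nseq n.-1 true ++ nseq j false)).
Proof.
move=> hn hj; rewrite /windows size_cat !size_nseq.
have -> : (n.-1 + j).+1 - n = j by nlia.
rewrite map_inj_in_uniq ?iota_uniq // => i1 i2; rewrite !mem_iota !add0n => /andP[_ l1] /andP[_ l2] e.
have f : forall i, i < j -> count id (take n (drop i (nseq n.-1 true ++ nseq j false))) = n.-1 - i.
  move=> i li; rewrite drop_catl ?size_nseq; last by nlia.
  rewrite drop_nseq take_catr ?size_nseq; last by nlia.
  rewrite take_nseq; last by nlia.
  by rewrite count_cat !count_nseq /= mul1n mul0n addn0.
have := f _ l1; rewrite e f //; nlia.
Qed.

Lemma zeros n : 1 < n -> forall k, k <= n ->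
  iter k (martin_step n) (nseq n.-1 true) = nseq n.-1 true ++ nseq k false.
Proof.
move=> hn; elim => [|k IH] hk /=; first by rewrite cats0.
by rewrite IH ?(ltnW hk) // /martin_step rcons_cat nseqSr uniq_init.
Qed.

Lemma db_struct n : 1 < n -> exists s, db n = nseq n false ++ s.
Proof.
move=> hn; rewrite /db /martin.
have -> : 2^n = (2^n - n) + n by rewrite subnK // ltnW // ltn_expl.
rewrite iterD zeros //.
have [s ->] := @iter_prefix n (2^n - n) (nseq n.-1 true ++ nseq n false).
by exists s; rewrite -catA drop_size_cat // size_nseq.
Qed.

Lemma martin_split n : 1 < n -> martin n = nseq n.-1 true ++ db n.
Proof.
move=> hn; have [[h1 h2 h3 h4] _] := martin_final hn.
by rewrite /db -{1}(cat_take_drop n.-1 (martin n)) h2.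
Qed.

Lemma db_size n : 1 < n -> size (db n) = 2^n.
Proof.
move=> hn; have [hI hst] := martin_final hn; have hI' := hI.
case: hI' => h1 h2 h3 h4.
have sz : size (windows n (martin n)) = 2^n.
  apply/eqP; rewrite eqn_leq; apply/andP; split.
    rewrite -(size_AW n); apply: uniq_leq_size h3 _ => w /size_win /mem_AW; exact.
  rewrite -(size_AW n); apply: uniq_leq_size (uniq_AW n) _ => w /AW_size.
  exact: claim2 hn hI hst w.
rewrite /db size_drop; move: sz; rewrite size_windows; nlia.
Qed.

Lemma db_ones n : 1 < n -> drop (2^n - n.-1) (db n) = nseq n.-1 true.
Proof.
move=> hn; have [hI hst] := martin_final hn; have hI' := hI.
case: hI' => h1 h2 h3 h4.
have ds := db_size hn; have := ltn_expl n (isT : 1 < 2) => lt.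
move: ds; rewrite /db size_drop => ds.
rewrite drop_drop.
have -> : 2 ^ n - n.-1 + n.-1 = (size (martin n)).+1 - n by nlia.
exact: claim1 hn hI hst.
Qed.

Lemma Sblock_split n : 1 < n -> exists z rest,
  [/\ Sblock n = db n ++ z ++ rest, n <= size z & take n.-1 z = take n.-1 (db n)].
Proof.
move=> hn.
have hd : n <= size (db n) by rewrite db_size // ltnW // ltn_expl.
have def : n = todd n * 2 ^ sexp n by rewrite /todd /sexp divnK // pfactor_dvdnn.
rewrite /Sblock.
case et: (todd n) def => [|t] def; first by move: hn; rewrite def mul0n.
have p0 : 0 < 2 ^ sexp n by rewrite expn_gt0.
case ep: (2 ^ sexp n) p0 def => [|u] // _ def.
rewrite /= /Bblock et /dbi rot0 /= -catA.
case: t et def => [|t] et def.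
  have eu : n = u.+1 by rewrite def mul1n.
  case: u ep eu def => [|u] ep eu def; first by move: hn; rewrite eu.
  rewrite /= cats0.
  exists (rot 1 (db n)); eexists; split; first reflexivity.
    by rewrite size_rot.
  have [s ds] := db_struct hn; rewrite ds.
  case: n {hn hd def ds et eu ep} => [|m] /=; first by rewrite !take0.
  have e : forall m, false :: nseq m false = nseq m false ++ [:: false] by elim=> //= k ->.
  rewrite /rot /= drop0 take0 -catA take_size_cat ?size_nseq //.
  by rewrite -cat_cons e -catA take_size_cat ?size_nseq.
by rewrite /= -catA; exists (db n); eexists; split; first reflexivity.
Qed.

Lemma key n z : 1 < n -> size z = n -> take n.-1 z = take n.-1 (db n) ->
  forall w, size w = n -> exists2 p, p < 2^n & take n (drop p (db n ++ z)) = w.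
Proof.
move=> hn sz tz w sw.
have [hI hst] := martin_final hn.
have := claim2 hn hI hst sw; rewrite martin_split //.
case/windowsP => i; rewrite size_cat size_nseq db_size // => hi ->.
have lt := ltn_expl n (isT : 1 < 2).
have dsz := db_size hn.
case: (ltnP i n.-1) => hi1.
  exists (2^n - n.-1 + i); first by nlia.
  have L : take n (drop i (nseq n.-1 true ++ db n)) =
      nseq (n.-1 - i) true ++ take (n - (n.-1 - i)) (db n).
    rewrite drop_catl ?size_nseq; last by nlia.
    by rewrite drop_nseq take_catr ?size_nseq //; nlia.
  have st : size (take (2^n - n.-1) (db n)) = 2^n - n.-1 by rewrite size_takel // dsz; nlia.
  have R : take n (drop (2^n - n.-1 + i) (db n ++ z)) =
      nseq (n.-1 - i) true ++ take (n - (n.-1 - i)) z.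
    rewrite -{1}(cat_take_drop (2^n - n.-1) (db n)) db_ones // -catA.
    rewrite drop_catr st; last by rewrite ?st; nlia.
    have -> : 2 ^ n - n.-1 + i - (2 ^ n - n.-1) = i by nlia.
    rewrite drop_catl ?size_nseq; last by nlia.
    by rewrite drop_nseq take_catr ?size_nseq //; nlia.
  rewrite L R; congr cat.
  rewrite -(@take_takel _ _ n.-1 z); last by nlia.
  by rewrite tz take_takel //; nlia.
exists (i - n.-1); first by nlia.
rewrite [in RHS]drop_catr ?size_nseq // [in LHS]drop_catl; last by rewrite dsz; nlia.
rewrite takel_cat // size_drop dsz; nlia.
Qed.

Lemma occ_ge2 (f : pred nat) m i j : i != j -> i < m -> j < m -> f i -> f j ->
  2 <= count f (iota 0 m).
Proof.
wlog : i j / i < j.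
  move=> H ne; case: (ltngtP i j) => [l|l|e]; last by rewrite e eqxx in ne.
    exact: H.
  move=> *; apply: (H j i) => //; by rewrite eq_sym.
move=> lij _ _ jm fi fj.
have -> : m = j + (m - j) by nlia.
rewrite iotaD count_cat.
have c1 : 0 < count f (iota 0 j) by rewrite -has_count; apply/hasP; exists i; rewrite // mem_iota.
have c2 : 0 < count f (iota (0 + j) (m - j)).
  rewrite -has_count; apply/hasP; exists j => //; rewrite mem_iota; nlia.
nlia.
Qed.

Theorem lemma2 (n : nat) : 2 <= n ->
  forall w : seq bool, size w = n ->
    ppm_context (Sprefix n ++ take (2 ^ n + n) (Sblock n)) w.
Proof.
move=> hn w sw.
have [z [rest [eS hz tz]]] := Sblock_split hn.
have sz' : size (take n z) = n by rewrite size_takel.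
have tz' : take n.-1 (take n z) = take n.-1 (db n) by rewrite take_takel ?leq_pred.
have dsz := db_size hn.
have ey : take (2^n + n) (Sblock n) = db n ++ take n z.
  rewrite eS take_catr; last by rewrite dsz leq_addr.
  by rewrite dsz addKn takel_cat.
rewrite ey; move: (take n z) sz' tz' => z' sz' tz'.
have kk := key hn sz' tz'.
have lt := ltn_expl n (isT : 1 < 2).
right.
case/lastP: w sw => [|u c] sw; first by move: hn; rewrite -sw.
exists u, c; split => //.
have su : size u = n.-1 by rewrite size_rcons in sw; nlia.
have pos : forall p v, take n (drop p (db n ++ z')) = v -> forall k, k <= n ->
    take k (drop (size (Sprefix n) + p) (Sprefix n ++ db n ++ z')) = take k v.
  move=> p v <- k hk; rewrite drop_catr ?leq_addr // addKn take_takel //.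
have sx : size (Sprefix n ++ db n ++ z') = size (Sprefix n) + 2^n + n.
  by rewrite !size_cat dsz sz' addnA.
split.
  have s0 : size (rcons u false) = n by rewrite size_rcons su; nlia.
  have s1 : size (rcons u true) = n by rewrite size_rcons su; nlia.
  have [p0 hp0 e0] := kk _ s0.
  have [p1 hp1 e1] := kk _ s1.
  have tu : forall b, take n.-1 (rcons u b) = u by move=> b; rewrite -cats1 take_size_cat.
  apply: (@occ_ge2 _ _ (size (Sprefix n) + p0) (size (Sprefix n) + p1)).
  - apply/negP => /eqP e; have ep : p0 = p1 by nlia.
    by move: e0; rewrite ep e1 => /rcons_inj.
  - rewrite sx; nlia.
  - rewrite sx; nlia.
  - by rewrite /= su (pos _ _ e0) ?leq_pred // tu.
  - by rewrite /= su (pos _ _ e1) ?leq_pred // tu.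
have [p hp ep] := kk _ sw.
exists (nth false (db n ++ z') (p + n)).
rewrite /substr /occ -has_count; apply/hasP; exists (size (Sprefix n) + p).
  rewrite mem_iota sx !size_rcons su; nlia.
rewrite !size_rcons su.
have -> : (n.-1).+2 = n.+1 by nlia.
rewrite drop_catr ?leq_addr // addKn (take_nth false); last by rewrite size_drop size_cat dsz sz'; nlia.
by rewrite ep nth_drop.
Qed.
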